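(* Let $\mathcal A\in\mathbb C^{n_1\times n_2\times n_3}$, $\mathcal A^-\in\mathcal A\{1\}$ and $\mathcal X\in\mathbb C^{n_2\times n_1\times n_3}$. The following are equivalent: (a) $\mathcal X=\mathcal A^-\mathcal A\mathcal A^*$; (b) $\mathcal X\mathcal A\mathcal A^\dagger=\mathcal X$ and $\mathcal X(\mathcal A^\dagger)^*=\mathcal A^-\mathcal A$; (c) $\mathcal X\mathcal A\mathcal A^\dagger=\mathcal X$ and $\mathcal X\mathcal A=\mathcal A^-\mathcal A\mathcal A^*\mathcal A$; (d) $\mathcal A^-\mathcal A\mathcal X\mathcal A\mathcal A^\dagger=\mathcal X$ and $\mathcal A\mathcal X(\mathcal A^\dagger)^*=\mathcal A$.
   Context: Fix a nonsingular matrix $M\in\mathbb C^{n_3\times n_3}$. For $\mathcal C\in\mathbb C^{n_1\times n_2\times n_3}$ let $\widehat{\mathcal C}=\mathcal C\times_3M$, i.e. $\widehat{\mathcal C}_{ijk}=\sum_{l=1}^{n_3}M_{kl}\mathcal C_{ijl}$, and let $\widehat{\mathcal C}^{(i)}$ denote its $i$-th frontal slice. The M-product $\mathcal C\star_M\mathcal D$ of $\mathcal C\in\mathbb C^{n_1\times n_2\times n_3}$ and $\mathcal D\in\mathbb C^{n_2\times l\times n_3}$ is the unique tensor with $\widehat{\mathcal C\star_M\mathcal D}^{(i)}=\widehat{\mathcal C}^{(i)}\widehat{\mathcal D}^{(i)}$ for all $i\in[n_3]$. Juxtaposition of tensors denotes the M-product. The conjugate transpose $\mathcal A^*$ is defined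 by $\widehat{\mathcal A^*}^{(i)}=(\widehat{\mathcal A}^{(i)})^*$. The Moore–Penrose inverse $\mathcal A^\dagger$ is the unique $\mathcal W$ satisfying $\mathcal A\mathcal W\mathcal A=\mathcal A$, $\mathcal W\mathcal A\mathcal W=\mathcal W$, $(\mathcal A\mathcal W)^*=\mathcal A\mathcal W$, $(\mathcal W\mathcal A)^*=\mathcal W\mathcal A$. $\mathcal A\{1\}$ is the set of all $\mathcal W$ with $\mathcal A\mathcal W\mathcal A=\mathcal A$. *)

(* Defs.v *)
From HB Require Import structures.
From mathcomp Require Import all_boot all_order all_algebra.
Set Implicit Arguments. Unset Strict Implicit. Unset Printing Implicit Defensive.
Import Order.TTheory GRing.Theory Num.Theory.
Local Open Scope ring_scope.

(* Scalars: an arbitrary numClosedFieldType C (algebraically closed field with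
   conjugation), which covers the complex numbers. *)

(* Third-order tensors n1 x n2 x n3, stored as their n3 frontal slices. *)
Definition tensor (C : numClosedFieldType) (n1 n2 n3 : nat) :=
  {ffun 'I_n3 -> 'M[C]_(n1, n2)}.

Definition ctrmx (C : numClosedFieldType) m n (A : 'M[C]_(m, n)) : 'M[C]_(n, m) :=
  (map_mx Num.conj A)^T.

Definition mode3 (C : numClosedFieldType) n1 n2 n3 (M : 'M[C]_n3)
  (T : tensor C n1 n2 n3) : tensor C n1 n2 n3 :=
  [ffun k => \sum_(l < n3) M k l *: T l].

(* The M-product: the unique tensor whose transformed slices are the products
   of the transformed slices (M nonsingular), i.e. (hat C * hat D) x_3 M^{-1}. *)
Definition mprod (C : numClosedFieldType) n1 n2 l n3 (M : 'M[C]_n3)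
  (A : tensor C n1 n2 n3) (B : tensor C n2 l n3) : tensor C n1 l n3 :=
  mode3 (invmx M) [ffun i => mode3 M A i *m mode3 M B i].

Definition mctr (C : numClosedFieldType) n1 n2 n3 (M : 'M[C]_n3)
  (A : tensor C n1 n2 n3) : tensor C n2 n1 n3 :=
  mode3 (invmx M) [ffun i => ctrmx (mode3 M A i)].

Definition is_mpinv (C : numClosedFieldType) n1 n2 n3 (M : 'M[C]_n3)
  (A : tensor C n1 n2 n3) (W : tensor C n2 n1 n3) : Prop :=
  [/\ mprod M (mprod M A W) A = A,
      mprod M (mprod M W A) W = W,
      mctr M (mprod M A W) = mprod M A W &
      mctr M (mprod M W A) = mprod M W A].

Definition is_inner_inv (C : numClosedFieldType) n1 n2 n3 (M : 'M[C]_n3)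
  (A : tensor C n1 n2 n3) (W : tensor C n2 n1 n3) : Prop :=
  mprod M (mprod M A W) A = A.

(* Main.v *)
Require Import Defs.
From mathcomp Require Import all_boot all_order all_algebra.
Set Implicit Arguments. Unset Strict Implicit. Unset Printing Implicit Defensive.
Import Order.TTheory GRing.Theory Num.Theory.
Local Open Scope ring_scope.

Lemma ctrmx_mul (C : numClosedFieldType) m n p (A : 'M[C]_(m, n)) (B : 'M[C]_(n, p)) :
  ctrmx (A *m B) = ctrmx B *m ctrmx A.
Proof. by rewrite /ctrmx map_mxM trmx_mul. Qed.

Lemma ctrmxK (C : numClosedFieldType) m n (A : 'M[C]_(m, n)) : ctrmx (ctrmx A) = A.
Proof. by apply/matrixP=> i j; rewrite /ctrmx !mxE conjCK. Qed.

Section Mat.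
Lemma mat_thm (C : numClosedFieldType) n1 n2 (A : 'M[C]_(n1, n2)) (G D X : 'M[C]_(n2, n1))
  (HG : A *m G *m A = A) (H1 : A *m D *m A = A) (H2 : D *m A *m D = D)
  (H3 : ctrmx (A *m D) = A *m D) (H4 : ctrmx (D *m A) = D *m A) :
  [/\ (X = G *m A *m ctrmx A ->
        X *m A *m D = X /\ X *m ctrmx D = G *m A),
      (X *m A *m D = X /\ X *m ctrmx D = G *m A ->
        X *m A *m D = X /\ X *m A = G *m A *m ctrmx A *m A),
      (X *m A *m D = X /\ X *m A = G *m A *m ctrmx A *m A ->
        G *m A *m X *m A *m D = X /\ A *m X *m ctrmx D = A) &
      (G *m A *m X *m A *m D = X /\ A *m X *m ctrmx D = A ->
        X = G *m A *m ctrmx A)].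
Proof.
have E1 : ctrmx A *m A *m D = ctrmx A.
  by rewrite -mulmxA -H3 -ctrmx_mul H1.
have E2 : ctrmx D *m ctrmx A = A *m D by rewrite -ctrmx_mul H3.
have E3 : ctrmx A *m ctrmx D = D *m A by rewrite -ctrmx_mul H4.
have K2 : G *m A *m G *m A = G *m A.
  by rewrite -mulmxA -(mulmxA G A) (mulmxA A G) HG.
have E1' : forall m (Y : 'M[C]_(m, n2)), Y *m ctrmx A *m A *m D = Y *m ctrmx A.
  by move=> m Y; rewrite -!mulmxA (mulmxA (ctrmx A)) E1.
have E3' : forall m (Y : 'M[C]_(m, n2)), Y *m ctrmx A *m ctrmx D = Y *m D *m A.
  by move=> m Y; rewrite -mulmxA E3 mulmxA.
split.
- move=> ->; split; first by rewrite -!mulmxA (mulmxA (ctrmx A)) E1.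
  by rewrite -mulmxA E3 -mulmxA (mulmxA A D A) H1.
- move=> [HX HD]; split=> //.
  have : X *m ctrmx D *m ctrmx A *m A = G *m A *m ctrmx A *m A by rewrite HD.
  by rewrite -(mulmxA X) E2 mulmxA HX.
- move=> [HX HA].
  have HXe : X = G *m A *m ctrmx A *m A *m D by rewrite -HX HA.
  split.
  + rewrite HXe !mulmxA K2 !E1' //.
  + rewrite HXe !mulmxA HG E1' E3' H1 //.
- move=> [HX HA].
  have : A *m X *m ctrmx D *m ctrmx A = A *m ctrmx A by rewrite HA.
  rewrite -(mulmxA _ (ctrmx D)) E2 mulmxA => Z.
  by rewrite -HX -!mulmxA (mulmxA A X) (mulmxA (A *m X) A) Z mulmxA.
Qed.
End Mat.

Lemma mode3_comp (C : numClosedFieldType) n1 n2 n3 (P Q : 'M[C]_n3)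
  (T : tensor C n1 n2 n3) : mode3 P (mode3 Q T) = mode3 (P *m Q) T.
Proof.
apply/ffunP=> k; rewrite !ffunE.
under eq_bigr => l _ do rewrite ffunE scaler_sumr.
rewrite exchange_big /=; apply: eq_bigr => m _.
by rewrite mxE scaler_suml; apply: eq_bigr => l _; rewrite scalerA.
Qed.

Lemma mode3_1 (C : numClosedFieldType) n1 n2 n3 (T : tensor C n1 n2 n3) :
  mode3 1%:M T = T.
Proof.
apply/ffunP=> k; rewrite ffunE (bigD1 k) //= big1 ?addr0.
  by rewrite mxE eqxx scale1r.
by move=> l /negPf lk; rewrite mxE eq_sym lk scale0r.
Qed.

Lemma hatK (C : numClosedFieldType) n1 n2 n3 (M : 'M[C]_n3) (HM : M \in unitmx)
  (T : tensor C n1 n2 n3) : mode3 M (mode3 (invmx M) T) = T.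
Proof. by rewrite mode3_comp mulmxV // mode3_1. Qed.

Lemma invK (C : numClosedFieldType) n1 n2 n3 (M : 'M[C]_n3) (HM : M \in unitmx)
  (T : tensor C n1 n2 n3) : mode3 (invmx M) (mode3 M T) = T.
Proof. by rewrite mode3_comp mulVmx // mode3_1. Qed.

Lemma hat_mprod (C : numClosedFieldType) n1 n2 l n3 (M : 'M[C]_n3) (HM : M \in unitmx)
  (A : tensor C n1 n2 n3) (B : tensor C n2 l n3) i :
  mode3 M (mprod M A B) i = mode3 M A i *m mode3 M B i.
Proof. by rewrite /mprod hatK // ffunE. Qed.

Lemma hat_mctr (C : numClosedFieldType) n1 n2 n3 (M : 'M[C]_n3) (HM : M \in unitmx)
  (A : tensor C n1 n2 n3) i :
  mode3 M (mctr M A) i = ctrmx (mode3 M A i).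
Proof. by rewrite /mctr hatK // ffunE. Qed.

Lemma teq (C : numClosedFieldType) n1 n2 n3 (M : 'M[C]_n3) (HM : M \in unitmx)
  (T U : tensor C n1 n2 n3) :
  (forall i, mode3 M T i = mode3 M U i) -> T = U.
Proof.
move=> H; rewrite -(invK HM T) -(invK HM U); congr mode3; exact/ffunP.
Qed.

Theorem theorem3p13 (C : numClosedFieldType) (n1 n2 n3 : nat) (M : 'M[C]_n3)
  (HM : M \in unitmx)
  (A : tensor C n1 n2 n3) (Am : tensor C n2 n1 n3) (Ad : tensor C n2 n1 n3)
  (X : tensor C n2 n1 n3)
  (HAm : is_inner_inv M A Am) (HAd : is_mpinv M A Ad) :
  let Ast := mctr M A in
  [<-> (* (a) *) X = mprod M (mprod M Am A) Ast;
       (* (b) *) mprod M (mprod M X A) Ad = X /\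
                 mprod M X (mctr M Ad) = mprod M Am A;
       (* (c) *) mprod M (mprod M X A) Ad = X /\
                 mprod M X A = mprod M (mprod M (mprod M Am A) Ast) A;
       (* (d) *) mprod M (mprod M (mprod M (mprod M Am A) X) A) Ad = X /\
                 mprod M (mprod M A X) (mctr M Ad) = A].
Proof.
move=> Ast; rewrite /Ast.
have sl := fun n1 n2 (T U : tensor C n1 n2 n3) (H : T = U) i =>
  f_equal (fun T => mode3 M T i) H.
case: HAd => D1 D2 D3 D4.
have T : forall i, _ := fun i => @mat_thm C n1 n2 (mode3 M A i) (mode3 M Am i)
  (mode3 M Ad i) (mode3 M X i)
  (ltac:(have := sl _ _ _ _ HAm i; rewrite !hat_mprod //))
  (ltac:(have := sl _ _ _ _ D1 i; rewrite !hat_mprod //))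
  (ltac:(have := sl _ _ _ _ D2 i; rewrite !hat_mprod //))
  (ltac:(have := sl _ _ _ _ D3 i; rewrite !hat_mctr // !hat_mprod //))
  (ltac:(have := sl _ _ _ _ D4 i; rewrite !hat_mctr // !hat_mprod //)).
tfae.
- move=> H; have {}H := sl _ _ _ _ H.
  split; apply: (teq HM) => i; have [t _ _ _] := T i;
  have := H i; rewrite ?hat_mprod ?hat_mctr // => /t [];
  rewrite ?hat_mprod ?hat_mctr //.
- move=> [H1 H2]; have {}H1 := sl _ _ _ _ H1; have {}H2 := sl _ _ _ _ H2.
  split; apply: (teq HM) => i; have [_ t _ _] := T i;
  have := H1 i; have := H2 i; rewrite ?hat_mprod ?hat_mctr // => a b;
  have [] := t (conj b a); rewrite ?hat_mprod ?hat_mctr //.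
- move=> [H1 H2]; have {}H1 := sl _ _ _ _ H1; have {}H2 := sl _ _ _ _ H2.
  split; apply: (teq HM) => i; have [_ _ t _] := T i;
  have := H1 i; have := H2 i; rewrite ?hat_mprod ?hat_mctr // => a b;
  have [] := t (conj b a); rewrite ?hat_mprod ?hat_mctr //.
- move=> [H1 H2]; have {}H1 := sl _ _ _ _ H1; have {}H2 := sl _ _ _ _ H2.
  apply: (teq HM) => i; have [_ _ _ t] := T i;
  have := H1 i; have := H2 i; rewrite ?hat_mprod ?hat_mctr // => a b;
  have := t (conj b a); rewrite ?hat_mprod ?hat_mctr //.
Qed.
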